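(* Let $G=(V,E)$ be a finite undirected graph with $V=\{1,\dots,n\}$, and let $A,B,C\subseteq V$ be nonempty pairwise disjoint sets with $V=A\cup B\cup C$, such that $C$ separates $A$ from $B$ in $G$ and $C$ is complete in $G$. Let $N$ be a symmetric positive definite $n\times n$ real matrix and $M=N_G$. Then $M$ is positive definite if and only if all of the following hold: (1) $M_{A\cup C}=\begin{pmatrix} M_{AA} & M_{AC}\\ M_{CA} & M_{CC}\end{pmatrix}$ is positive definite; (2) $M_{B\cup C}=\begin{pmatrix} M_{CC} & M_{CB}\\ M_{BC} & M_{BB}\end{pmatrix}$ is positive definite; (3) $S_1+S_2-M_{CC}$ is positive definite, where $S_1=M_{CC}-M_{CA}M_{AA}^{-1}M_{AC}$ and $S_2=M_{CC}-M_{CB}M_{BB}^{-1}M_{BC}$. Moreover, the same equivalence holds when conditions (1) and (2) are replaced by (1') $M_{AA}$ is positive definite and (2') $M_{BB}$ is positive definite.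
   Context: For a symmetric $n\times n$ real matrix $N=(n_{ij})$, $N_G$ is defined by $(N_G)_{ij}=n_{ij}$ if $i=j$ or $(i,j)\in E$, and $0$ otherwise. For index sets $X,Y\subseteq V$, $M_{XY}$ denotes the submatrix of $M$ with rows indexed by $X$ and columns indexed by $Y$. $C$ separates $A$ from $B$ means every path in $G$ from a vertex of $A$ to a vertex of $B$ contains a vertex of $C$; $C$ complete means every two distinct vertices of $C$ are adjacent. *)

(* Defs.v *)
From HB Require Import structures.
From mathcomp Require Import all_boot all_order all_algebra.
Set Implicit Arguments. Unset Strict Implicit. Unset Printing Implicit Defensive.
Import Order.TTheory GRing.Theory Num.Theory.
Local Open Scope ring_scope.

(* A simple undirected graph on V = 'I_n is a symmetric irreflexive relation e. *)

Definition posdef (R : realFieldType) (m : nat) (M : 'M[R]_m) : Prop :=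
  M^T = M /\ forall x : 'cV[R]_m, x != 0 -> 0 < (x^T *m M *m x) 0 0.

Definition restrictG (R : pzRingType) (n : nat) (e : rel 'I_n) (N : 'M[R]_n)
  : 'M[R]_n :=
  \matrix_(i, j) (if (i == j) || e i j then N i j else 0).

Definition subM (R : Type) (n : nat) (X Y : {set 'I_n}) (M : 'M[R]_n)
  : 'M[R]_(#|X|, #|Y|) :=
  \matrix_(i, j) M (enum_val i) (enum_val j).

Definition separates (n : nat) (e : rel 'I_n) (C A B : {set 'I_n}) : Prop :=
  forall (a : 'I_n) (p : seq 'I_n),
    a \in A -> path e a p -> last a p \in B -> has (mem C) (a :: p).

Definition complete (n : nat) (e : rel 'I_n) (C : {set 'I_n}) : Prop :=
  forall x y, x \in C -> y \in C -> x != y -> e x y.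

(* Main.v *)
Require Import Defs.
From HB Require Import structures.
From mathcomp Require Import all_boot all_order all_algebra.
From mathcomp Require Import lra.
Import Order.TTheory GRing.Theory Num.Theory.
Local Open Scope ring_scope.
Set Implicit Arguments. Unset Strict Implicit. Unset Printing Implicit Defensive.

Lemma complete_sq (R : realFieldType) m k (Maa : 'M[R]_m) (Mac : 'M[R]_(m,k)) (Mca : 'M[R]_(k,m))
  (a : 'cV[R]_m) (c : 'cV[R]_k) :
 Maa \in unitmx -> Maa^T = Maa -> Mca = Mac^T ->
 (a + invmx Maa *m Mac *m c)^T *m Maa *m (a + invmx Maa *m Mac *m c) =
   a^T *m Maa *m a + a^T *m Mac *m c + c^T *m Mca *m a
   + c^T *m (Mca *m invmx Maa *m Mac) *m c.
Proof.
move=> U S ->.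
have KT : (invmx Maa *m Mac)^T *m Maa = Mac^T.
  by rewrite trmx_mul trmx_inv S -mulmxA mulVmx // mulmx1.
rewrite [(_ + _)^T]linearD /= !mulmxDr !mulmxDl.
have E1 : a^T *m Maa *m (invmx Maa *m Mac *m c) = a^T *m Mac *m c.
  by rewrite -!mulmxA mulKVmx.
have E2 : (invmx Maa *m Mac *m c)^T *m Maa *m a = c^T *m Mac^T *m a.
  by rewrite trmx_mul -[c^T *m _ *m Maa]mulmxA KT.
have E3 : (invmx Maa *m Mac *m c)^T *m Maa *m (invmx Maa *m Mac *m c)
   = c^T *m (Mac^T *m invmx Maa *m Mac) *m c.
  by rewrite trmx_mul -[c^T *m _ *m Maa]mulmxA KT !mulmxA.
by rewrite E1 E2 E3 !addrA (addrAC _ (c^T *m _ *m a)).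
Qed.

Section Aux.
Variable R : realFieldType.
Variable n : nat.

Definition PX (X : {set 'I_n}) : 'M[R]_(n, #|X|) :=
  \matrix_(i, k) ((i == enum_val k)%:R).

Lemma PXtM_mx (X : {set 'I_n}) m (M : 'M[R]_(n, m)) k j :
  ((PX X)^T *m M) k j = M (enum_val k) j.
Proof.
rewrite !mxE (bigD1 (enum_val k)) //= big1 ?addr0.
  by rewrite !mxE eqxx mul1r.
by move=> i /negPf ni; rewrite !mxE ni mul0r.
Qed.

Lemma MPX_mx (X : {set 'I_n}) m (M : 'M[R]_(m, n)) j k :
  (M *m PX X) j k = M j (enum_val k).
Proof.
rewrite !mxE (bigD1 (enum_val k)) //= big1 ?addr0.
  by rewrite !mxE eqxx mulr1.
by move=> i /negPf ni; rewrite !mxE ni mulr0.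
Qed.

Lemma subME (X Y : {set 'I_n}) (M : 'M[R]_n) :
  subM X Y M = (PX X)^T *m M *m PX Y.
Proof. by apply/matrixP=> k l; rewrite MPX_mx PXtM_mx mxE. Qed.

Lemma PtP (X : {set 'I_n}) : (PX X)^T *m PX X = 1%:M.
Proof.
apply/matrixP=> k l; rewrite PXtM_mx !mxE.
by rewrite (inj_eq enum_val_inj).
Qed.

Lemma PtP0 (X Y : {set 'I_n}) : [disjoint X & Y] -> (PX X)^T *m PX Y = 0.
Proof.
move=> dXY; apply/matrixP=> k l; rewrite PXtM_mx !mxE.
case: eqP => // E; move: (enum_valP k) (enum_valP l); rewrite E => h1 h2.
by move/disjoint_setI0: dXY => /setP/(_ (enum_val l)); rewrite inE h1 h2 inE.
Qed.

Lemma PPt (X : {set 'I_n}) : PX X *m (PX X)^T = \matrix_(i, j) ((i == j) && (i \in X))%:R.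
Proof.
apply/matrixP=> i j; rewrite !mxE.
case: (boolP (i \in X)) => iX.
  rewrite andbT (bigD1 (enum_rank_in iX i)) //= big1 ?addr0.
    by rewrite !mxE enum_rankK_in // eqxx mul1r eq_sym.
  move=> k nk; rewrite !mxE; case: eqP => [E|]; last by rewrite mul0r.
  have h := enum_valK_in iX k; rewrite -E in h.
  by rewrite h eqxx in nk.
rewrite andbF big1 // => k _; rewrite !mxE; case: eqP => [E|]; last by rewrite mul0r.
by move: (enum_valP k); rewrite -E (negPf iX).
Qed.


Lemma posdef_congr m k (M : 'M[R]_m) (Q : 'M[R]_(m, k)) :
  posdef M -> Q^T *m Q = 1%:M -> posdef (Q^T *m M *m Q).
Proof.
move=> [S P] QQ; split.
  by rewrite !trmx_mul trmxK S mulmxA.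
move=> x nx.
have Qx : Q *m x != 0.
  apply: contra nx => /eqP h; apply/eqP.
  by rewrite -[x]mul1mx -QQ -mulmxA h mulmx0.
have := P _ Qx; by rewrite trmx_mul !mulmxA.
Qed.

Lemma posdef_unit m (M : 'M[R]_m) : posdef M -> M \in unitmx.
Proof.
move=> [S P]; rewrite unitmxE unitfE; apply/negP => /det0P [v nv vM].
have nvt : v^T != 0 by apply: contra nv => /eqP h; rewrite -[v]trmxK h linear0.
have := P _ nvt; rewrite trmxK vM mul0mx mxE ltxx //.
Qed.

Lemma posdef_ge0 m (M : 'M[R]_m) (w : 'cV[R]_m) : posdef M -> 0 <= (w^T *m M *m w) 0 0.
Proof.
move=> [_ P]; case: (eqVneq w 0) => [->|nw].
  by rewrite mulmx0 mxE.
exact: ltW (P _ nw).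
Qed.

Lemma subM_tr (M : 'M[R]_n) X Y : M^T = M -> (subM X Y M)^T = subM Y X M.
Proof. by move=> S; rewrite !subME !trmx_mul trmxK S mulmxA. Qed.

Lemma bilP (M : 'M[R]_n) (X Y : {set 'I_n}) p (u : 'M[R]_(#|X|, p)) (v : 'M[R]_(#|Y|, p)) :
  (PX X *m u)^T *m M *m (PX Y *m v) = u^T *m subM X Y M *m v.
Proof. by rewrite subME trmx_mul !mulmxA. Qed.

Lemma tr_inj1 (X Y : 'M[R]_1) : \tr X = \tr Y -> X = Y.
Proof.
rewrite !trace_mx11 => h; apply/matrixP => i j.
by rewrite !ord1.
Qed.

Lemma sumPPt (A B C : {set 'I_n}) :
  [disjoint A & B] -> [disjoint A & C] -> [disjoint B & C] ->
  A :|: B :|: C = [set: 'I_n] ->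
  PX A *m (PX A)^T + PX C *m (PX C)^T + PX B *m (PX B)^T = 1%:M.
Proof.
move=> dAB dAC dBC cov; apply/matrixP => i j; rewrite !PPt !mxE.
case: (eqVneq i j) => [_|_] /=; last by rewrite !addr0.
have : i \in A :|: B :|: C by rewrite cov inE.
rewrite !inE; case/orP => [/orP[]|] h.
- by rewrite h (disjointFr dAB h) (disjointFr dAC h) !addr0.
- by rewrite h (disjointFl dAB h) (disjointFr dBC h) add0r add0r.
- by rewrite h (disjointFl dAC h) (disjointFl dBC h) add0r addr0.
Qed.

Lemma quad_id (M : 'M[R]_n) (A B C : {set 'I_n}) (a : 'cV[R]_#|A|) (c : 'cV[R]_#|C|) (b : 'cV[R]_#|B|) :
  M^T = M -> subM A B M = 0 ->
  subM A A M \in unitmx -> subM B B M \in unitmx ->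
  (PX A *m a + PX C *m c + PX B *m b)^T *m M *m (PX A *m a + PX C *m c + PX B *m b) =
  (a + invmx (subM A A M) *m subM A C M *m c)^T *m subM A A M *m
     (a + invmx (subM A A M) *m subM A C M *m c)
  + (b + invmx (subM B B M) *m subM B C M *m c)^T *m subM B B M *m
     (b + invmx (subM B B M) *m subM B C M *m c)
  + c^T *m ((subM C C M - subM C A M *m invmx (subM A A M) *m subM A C M)
          + (subM C C M - subM C B M *m invmx (subM B B M) *m subM B C M)
          - subM C C M) *m c.
Proof.
move=> S AB UA UB.
have BA : subM B A M = 0 by rewrite -subM_tr // AB trmx0.
rewrite (@complete_sq _ _ _ _ _ (subM C A M) a c UA) ?subM_tr //.
rewrite (@complete_sq _ _ _ _ _ (subM C B M) b c UB) ?subM_tr //.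
rewrite ![(_ + _)^T]linearD /= ![(_ + _)^T]linearD /= !mulmxDr !mulmxDl !bilP AB BA.
rewrite !mulmxN !mulNmx !mulmx0 !mul0mx.
move: (a^T *m subM A A M *m a) (c^T *m subM C A M *m a) (a^T *m subM A C M *m c)
  (c^T *m subM C C M *m c) (b^T *m subM B C M *m c) (c^T *m subM C B M *m b)
  (b^T *m subM B B M *m b)
  (c^T *m (subM C A M *m invmx (subM A A M) *m subM A C M) *m c)
  (c^T *m (subM C B M *m invmx (subM B B M) *m subM B C M) *m c)
  => t1 t2 t3 t4 t5 t6 t7 t8 t9.
apply: tr_inj1; rewrite !(mxtraceD, raddfB, raddfN) /= !mxtrace0.
move: (\tr t1) (\tr t2) (\tr t3) (\tr t4) (\tr t5) (\tr t6) (\tr t7) (\tr t8) (\tr t9)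
  => s1 s2 s3 s4 s5 s6 s7 s8 s9.
lra.
Qed.

Lemma add00 (X Y : 'M[R]_1) : (X + Y) 0 0 = X 0 0 + Y 0 0.
Proof. by rewrite mxE. Qed.

Lemma zero00 : (0 : 'M[R]_1) 0 0 = 0.
Proof. by rewrite mxE. Qed.

Lemma restr_sym (e : rel 'I_n) (N : 'M[R]_n) :
  symmetric e -> N^T = N -> (restrictG e N)^T = restrictG e N.
Proof.
move=> se SN; apply/matrixP => i j; rewrite !mxE eq_sym se.
by move/matrixP: SN => /(_ j i); rewrite mxE => ->.
Qed.

Lemma restr_sep (e : rel 'I_n) (N : 'M[R]_n) (A B C : {set 'I_n}) :
  [disjoint A & B] -> [disjoint A & C] -> [disjoint B & C] ->
  separates e C A B -> subM A B (restrictG e N) = 0.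
Proof.
move=> dAB dAC dBC sep; apply/matrixP => i j; rewrite !mxE.
have hi := enum_valP i; have hj := enum_valP j.
have -> : (enum_val i == enum_val j :> 'I_n) = false.
  by apply/negbTE; apply: contraTneq hj => <-; rewrite (disjointFr dAB hi).
case E : (e _ _) => //=.
have := sep (enum_val i) [:: enum_val j] hi; rewrite /= E /= => /(_ isT hj).
by rewrite (disjointFr dAC hi) (disjointFr dBC hj).
Qed.

Lemma blk_eq (M : 'M[R]_n) (X Y : {set 'I_n}) :
  block_mx (subM X X M) (subM X Y M) (subM Y X M) (subM Y Y M)
  = (row_mx (PX X) (PX Y))^T *m M *m row_mx (PX X) (PX Y).
Proof. by rewrite tr_row_mx mul_col_mx mul_col_row !subME. Qed.

Lemma blk_QQ (X Y : {set 'I_n}) : [disjoint X & Y] ->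
  (row_mx (PX X) (PX Y))^T *m row_mx (PX X) (PX Y) = 1%:M.
Proof.
move=> d; rewrite tr_row_mx mul_col_row !PtP PtP0 // PtP0 1?disjoint_sym //.
by rewrite -scalar_mx_block.
Qed.

Lemma pd_sub m k (M : 'M[R]_m) (Q : 'M[R]_(m, k)) p (Q' : 'M[R]_(k, p)) :
  posdef (Q^T *m M *m Q) -> Q'^T *m Q' = 1%:M ->
  posdef ((Q *m Q')^T *m M *m (Q *m Q')).
Proof.
move=> P QQ; have := posdef_congr P QQ.
by rewrite trmx_mul !mulmxA.
Qed.

Lemma blk_pd (M : 'M[R]_n) (X Y : {set 'I_n}) :
  posdef (block_mx (subM X X M) (subM X Y M) (subM Y X M) (subM Y Y M)) ->
  posdef (subM X X M) /\ posdef (subM Y Y M).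
Proof.
rewrite blk_eq => P; split.
  have := pd_sub P (Q' := col_mx 1%:M 0).
  rewrite tr_col_mx mul_row_col trmx1 mulmx1 trmx0 mul0mx addr0 => /(_ erefl).
  by rewrite mul_row_col mulmx1 mulmx0 addr0 subME.
have := pd_sub P (Q' := col_mx 0 1%:M).
rewrite tr_col_mx mul_row_col trmx1 mulmx1 trmx0 mul0mx add0r => /(_ erefl).
by rewrite mul_row_col mulmx1 mulmx0 add0r subME.
Qed.

Lemma core (M : 'M[R]_n) (A B C : {set 'I_n}) :
  [disjoint A & B] -> [disjoint A & C] -> [disjoint B & C] ->
  A :|: B :|: C = [set: 'I_n] ->
  M^T = M -> subM A B M = 0 ->
  posdef M <-> [/\ posdef (subM A A M), posdef (subM B B M) &
     posdef ((subM C C M - subM C A M *m invmx (subM A A M) *m subM A C M)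
          + (subM C C M - subM C B M *m invmx (subM B B M) *m subM B C M)
          - subM C C M)].
Proof.
move=> dAB dAC dBC cov SM AB; split.
  move=> PM.
  have PA : posdef (subM A A M) by rewrite subME; apply: posdef_congr PM (PtP A).
  have PB : posdef (subM B B M) by rewrite subME; apply: posdef_congr PM (PtP B).
  have UA := posdef_unit PA; have UB := posdef_unit PB.
  split => //; split.
    rewrite !raddfB !raddfD !raddfN /= !trmx_mul !trmx_inv !subM_tr // !mulmxA.
    reflexivity.
  move=> c nc.
  pose a := - (invmx (subM A A M) *m subM A C M *m c).
  pose b := - (invmx (subM B B M) *m subM B C M *m c).
  have nx : PX A *m a + PX C *m c + PX B *m b != 0.
    apply: contra nc => /eqP h; apply/eqP.
    have := congr1 (mulmx (PX C)^T) h.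
    rewrite !mulmxDr !mulmxA PtP PtP0 1?disjoint_sym // PtP0 1?disjoint_sym //.
    by rewrite !mul0mx mul1mx add0r addr0 mulmx0.
  have := PM.2 _ nx; rewrite quad_id //.
  by rewrite /a /b !addNr !raddf0 !add0r.
move=> [PA PB PT]; split => // x nx.
have UA := posdef_unit PA; have UB := posdef_unit PB.
have hx : x = PX A *m ((PX A)^T *m x) + PX C *m ((PX C)^T *m x) + PX B *m ((PX B)^T *m x).
  by rewrite !mulmxA -!mulmxDl sumPPt // mul1mx.
move: nx; rewrite hx.
move: ((PX A)^T *m x) ((PX C)^T *m x) ((PX B)^T *m x) => a c b nx.
rewrite quad_id // !add00.
have h1 := posdef_ge0 (a + invmx (subM A A M) *m subM A C M *m c) PA.
have h2 := posdef_ge0 (b + invmx (subM B B M) *m subM B C M *m c) PB.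
case: (eqVneq c 0) => [c0|nc]; last first.
  have := PT.2 _ nc; lra.
move: h1 h2 nx; rewrite c0 !raddf0 !addr0 zero00 addr0 => h1 h2 nx.
case: (eqVneq a 0) => [a0|na].
  case: (eqVneq b 0) => [b0|nb].
    by move: nx; rewrite a0 b0 !raddf0 !addr0 eqxx.
  have := PB.2 _ nb; lra.
have := PA.2 _ na; lra.
Qed.
End Aux.

Theorem proposition2 (R : realFieldType) (n : nat) (e : rel 'I_n)
  (A B C : {set 'I_n}) (N : 'M[R]_n) :
  symmetric e -> irreflexive e ->
  A != set0 -> B != set0 -> C != set0 ->
  [disjoint A & B] -> [disjoint A & C] -> [disjoint B & C] ->
  A :|: B :|: C = [set: 'I_n] ->
  separates e C A B -> complete e C ->
  posdef N ->
  let M := restrictG e N in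
  let S1 := subM C C M - subM C A M *m invmx (subM A A M) *m subM A C M in
  let S2 := subM C C M - subM C B M *m invmx (subM B B M) *m subM B C M in
  (posdef M <->
     [/\ posdef (block_mx (subM A A M) (subM A C M) (subM C A M) (subM C C M)),
         posdef (block_mx (subM C C M) (subM C B M) (subM B C M) (subM B B M))
       & posdef (S1 + S2 - subM C C M)])
  /\
  (posdef M <->
     [/\ posdef (subM A A M), posdef (subM B B M)
       & posdef (S1 + S2 - subM C C M)]).
Proof.
move=> se _ _ _ _ dAB dAC dBC cov sep _ [SN _] M S1 S2.
have SM : M^T = M := restr_sym se SN.
have AB : subM A B M = 0 := restr_sep N dAB dAC dBC sep.
have Hc := core dAB dAC dBC cov SM AB.
rewrite /S1 /S2.
split; last exact: Hc.
split.
  move=> PM; have [PA PB PT] := Hc.1 PM; split => //.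
    by rewrite blk_eq; apply: posdef_congr PM (blk_QQ R dAC).
  by rewrite blk_eq; apply: posdef_congr PM (blk_QQ R _); rewrite disjoint_sym.
case=> P1 P2 PT; apply Hc.2; split => //.
  exact: (blk_pd P1).1.
exact: (blk_pd P2).2.
Qed.
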